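(* Let $\mathbb{A}$ be a non-empty set, $\varphi:\mathbb{A}^+\to C$ a finite coloring, $x\in\mathbb{A}^\omega$ and $k\ge1$. Then some suffix $x'$ of $x$ admits a $k$-shift invariant $\varphi$-sequentially monochromatic factorization.
   Context: $T$ denotes the shift on $\mathbb{A}^\omega$, $T(x_0x_1x_2\cdots)=x_1x_2\cdots$. A factorization $x'=V_0V_1V_2\cdots$ with all $V_i\in\mathbb{A}^+$ is $\varphi$-sequentially monochromatic if there is $c\in C$ with $\varphi(V_iV_{i+1}\cdots V_{i+j})=c$ for all $i,j\ge0$. Such a factorization is $k$-shift invariant if for every $1\le j\le k$ the induced factorization $T^j(x')=W_0W_1W_2\cdots$ with $|W_i|=|V_i|$ for all $i$ is also $\varphi$-sequentially monochromatic (the color may depend on $j$). *)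

(* Defs.v *)
From mathcomp Require Import all_boot.
Set Implicit Arguments. Unset Strict Implicit. Unset Printing Implicit Defensive.

(* A coloring of A^+ is a function phi : seq A -> C (its value on the empty
   word is irrelevant: it is only ever applied to non-empty words). *)

Definition shiftw (A : Type) (n : nat) (x : nat -> A) : nat -> A :=
  fun i => x (n + i).

Definition factorw (A : Type) (x : nat -> A) (m n : nat) : seq A :=
  mkseq (fun i => x (m + i)) (n - m).

(* A factorization V_0 V_1 V_2 ... of an infinite word into non-empty words
   is encoded by its cut points c : c 0 = 0, c strictly increasing, and
   V_i = x[c i, c (i+1)). *)
Definition is_factorization (c : nat -> nat) : Prop :=
  c 0 = 0 /\ forall i, c i < c i.+1.

Definition seq_mono (A : Type) (C : Type) (phi : seq A -> C)
    (x : nat -> A) (c : nat -> nat) : Prop :=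
  exists col : C, forall i j, phi (factorw x (c i) (c (i + j).+1)) = col.

(* k-shift invariance: for 1 <= j <= k, the induced factorization of T^j x
   with the same block lengths (i.e. the same cut points) is also
   phi-sequentially monochromatic. *)
Definition k_shift_invariant (A : Type) (C : Type) (phi : seq A -> C)
    (x : nat -> A) (c : nat -> nat) (k : nat) : Prop :=
  forall j, 1 <= j <= k -> seq_mono phi (shiftw j x) c.

(* Main.v *)
From Stdlib Require Import Classical ClassicalEpsilon.
Require Import Defs.
From mathcomp Require Import all_boot.
From mathcomp Require Import zify.

Definition inf (P : nat -> Prop) := forall N, exists s, N < s /\ P s.

Lemma pigeon (C : eqType) (g : nat -> C) (l : seq C) :
  forall S : nat -> Prop, inf S -> (forall s, S s -> g s \in l) ->
  exists c, inf (fun s => S s /\ g s = c).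
Proof.
elim: l => [|c l IH] S hS hl.
  by have [s [_ /hl]] := hS 0.
have [hc|hc] := classic (inf (fun s => S s /\ g s = c)); first by exists c.
have [N hN] : exists N, forall s, N < s -> ~ (S s /\ g s = c).
  apply: NNPP => H; apply: hc => M; apply: NNPP => H2; apply: H; exists M.
  by move=> s hs hSs; apply: H2; exists s.
have [c' hc'] : exists c', inf (fun s => (S s /\ N < s) /\ g s = c').
  apply: IH.
    move=> M; have [s [hs hSs]] := hS (maxn M N).
    by exists s; split; [lia| split=> //; lia].
  move=> s [hSs hNs]; have := hl s hSs; rewrite in_cons => /orP [/eqP e|//].
  by exfalso; apply: (hN s hNs).
exists c' => M; have [s [hs [[h1 _] h2]]] := hc' M; by exists s.
Qed.

Section Ramsey.
Variables (C : finType) (f : nat -> nat -> C).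

Definition stepP (S : nat -> Prop) (pc : nat * C) :=
  S pc.1 /\ inf (fun s => S s /\ pc.1 < s /\ f pc.1 s = pc.2).

Lemma step_ex S : inf S -> exists pc, stepP S pc.
Proof.
move=> hS; have [p [_ hp]] := hS 0.
have [c hc] : exists c, inf (fun s => (S s /\ p < s) /\ f p s = c).
  apply: pigeon (enum C) _ _ _ => [M|s _]; last by rewrite mem_enum.
  have [s [hs hSs]] := hS (maxn M p); exists s; split; [lia|split=>//; lia].
exists (p, c); split=> //= M; have [s [hs [[h1 h2] h3]]] := hc M.
by exists s.
Qed.

Let inhC : inhabited (nat * C) := inhabits (0, f 0 0).

Definition pcof S := epsilon inhC (stepP S).

Fixpoint Sseq (i : nat) : nat -> Prop :=
  match i with
  | 0 => fun _ => True
  | i'.+1 => fun s => Sseq i' s /\ (pcof (Sseq i')).1 < s /\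
                      f (pcof (Sseq i')).1 s = (pcof (Sseq i')).2
  end.

Lemma Sseq_inf i : inf (Sseq i) /\ stepP (Sseq i) (pcof (Sseq i)).
Proof.
have H : forall S, inf S -> stepP S (pcof S).
  by move=> S hS; apply: epsilon_spec; apply: step_ex.
elim: i => [|i [_ IH]].
  have h : inf (Sseq 0) by move=> N; exists N.+1.
  by split=> //; apply: H.
have h : inf (Sseq i.+1) by exact: IH.2.
by split=> //; apply: H.
Qed.

Lemma Sseq_sub i j s : i <= j -> Sseq j s -> Sseq i s.
Proof.
move=> hij; rewrite -(subnKC hij); elim: (j - i) s => [|m IH] s.
  by rewrite addn0.
by rewrite addnS => -[h _]; apply: IH.
Qed.

Definition pc i := pcof (Sseq i).

Lemma pc_prop i j : i < j -> (pc i).1 < (pc j).1 /\ f (pc i).1 (pc j).1 = (pc i).2.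
Proof.
move=> hij; have [_ [hj _]] := Sseq_inf j.
have := @Sseq_sub i.+1 j _ hij hj; by move=> [_ [h1 h2]].
Qed.

Lemma ramsey : exists (d : nat -> nat) (col : C),
  (forall a b, a < b -> d a < d b) /\ (forall a b, a < b -> f (d a) (d b) = col).
Proof.
have [col hcol] : exists c, inf (fun i => True /\ (pc i).2 = c).
  apply: pigeon (enum C) _ _ _ => [M|s _]; last by rewrite mem_enum.
  by exists M.+1.
pose P i := (pc i).2 = col.
have inh : inhabited nat := inhabits 0.
pose e := fix e n := match n with
  | 0 => epsilon inh (fun i => P i)
  | n'.+1 => epsilon inh (fun i => e n' < i /\ P i) end.
have he : forall n, P (e n) /\ e n < e n.+1.
  have h1 : forall m, exists i, m < i /\ P i.
    by move=> m; have [s [hs [_ hp]]] := hcol m; exists s.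
  have h2 : forall n, e n < e n.+1 /\ P (e n.+1).
    by move=> n; apply: (epsilon_spec inh (fun i => e n < i /\ P i)); apply: h1.
  case=> [|n]; last by split; [exact: (h2 n).2 | exact: (h2 n.+1).1].
  split; last exact: (h2 0).1.
  by apply: (epsilon_spec inh P); have [i [_ ?]] := h1 0; exists i.
have emono : forall a b, a < b -> e a < e b.
  move=> a b hab; rewrite -(subnKC hab); elim: (b - a.+1) => [|m IH].
    by rewrite addn0; exact: (he a).2.
  by rewrite addnS; apply: ltn_trans IH (he _).2.
exists (fun a => (pc (e a)).1), col; split.
  by move=> a b /emono /pc_prop [].
move=> a b /emono /pc_prop [_ ->]; exact: (he a).1.
Qed.

End Ramsey.

Theorem corollary3p2 (A : Type) (C : finType) (phi : seq A -> C)
    (x : nat -> A) (k : nat) (hk : 1 <= k) :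
  exists (n : nat) (c : nat -> nat),
    is_factorization c /\
    seq_mono phi (shiftw n x) c /\
    k_shift_invariant phi (shiftw n x) c k.
Proof.
pose F m n := [ffun j : 'I_k.+1 => phi (mkseq (fun t => x (j + (m + t))) (n - m))].
have [d [col [dmono dcol]]] := @ramsey _ F.
pose n := d 0; pose c i := d i - n.
have dle : forall i, n <= d i.
  by case=> [|i]; [rewrite leqnn | apply: ltnW; apply: dmono].
have key : forall j, j <= k -> forall i l, i < l ->
    phi (factorw (shiftw j (shiftw n x)) (c i) (c l)) = col (inord j).
  move=> j hj i l hil; rewrite -(dcol _ _ hil) ffunE inordK; last by lia.
  have hdl := dmono _ _ hil; have hi := dle i.
  rewrite /factorw /shiftw.
  have -> : c l - c i = d l - d i by rewrite /c; lia.
  congr phi; apply: eq_mkseq => t /=; congr x; rewrite /c; lia.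
exists n, c; split; [split|split].
- by rewrite /c subnn.
- move=> i; rewrite /c; have := dmono _ _ (ltnSn i); have := dle i; lia.
- exists (col (inord 0)) => i j; apply: (key 0 (leq0n _) i (i + j).+1); lia.
- move=> j /andP [_ hj]; exists (col (inord j)) => i l.
  apply: (key j hj i (i + l).+1); lia.
Qed.
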